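(* For $p\ge2$, $\dfrac{1+z_p}{2}\ge\dfrac{p}{p+2}$, equivalently $\dfrac{1+z_p}{1-z_p}\ge\dfrac p2$.
   Context: For $p=\alpha(\alpha+1)$, $\alpha>0$, $L_\alpha$ is the solution on $(-1,1)$ of $(1-s^2)y''-2sy'+py=0$ bounded near $1$ with $L_\alpha(1)=1$, and $z_p$ is its largest zero in $(-1,1)$ (for $p=2$, $L_1(s)=s$, $z_2=0$). *)

(* Defs.v *)
From Stdlib Require Import Reals Lra.
Open Scope R_scope.

Definition legendre_ode (p : R) (L : R -> R) : Prop :=
  exists L1 L2 : R -> R,
    forall s, -1 < s < 1 ->
      derivable_pt_lim L s (L1 s) /\
      derivable_pt_lim L1 s (L2 s) /\
      (1 - s^2) * L2 s - 2 * s * L1 s + p * L s = 0.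

Definition bounded_near_1 (L : R -> R) : Prop :=
  exists M d, 0 < d /\ forall s, 1 - d < s < 1 -> Rabs (L s) <= M.

(* L(1) = 1, understood as the (left) limit at 1 of the solution on (-1,1). *)
Definition value_1_at_1 (L : R -> R) : Prop :=
  forall eps, 0 < eps -> exists d, 0 < d /\
    forall s, 1 - d < s < 1 -> Rabs (L s - 1) < eps.

Definition is_L_alpha (alpha : R) (L : R -> R) : Prop :=
  legendre_ode (alpha * (alpha + 1)) L /\ bounded_near_1 L /\ value_1_at_1 L.

Definition largest_zero (L : R -> R) (z : R) : Prop :=
  -1 < z < 1 /\ L z = 0 /\ forall s, z < s < 1 -> L s <> 0.

(* Main.v *)
Require Import Defs.
From Stdlib Require Import Reals Lra Psatz Ranalysis5.
Open Scope R_scope.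

Lemma lim_ext f x l l' : derivable_pt_lim f x l -> l = l' -> derivable_pt_lim f x l'.
Proof. intros H ->; exact H. Qed.

Lemma cont_of_lim f x l : derivable_pt_lim f x l -> continuity_pt f x.
Proof. intro H. apply derivable_continuous_pt. exists l. exact H. Qed.

Lemma d_1ms2 s : derivable_pt_lim (fun s => 1 - s^2) s (- 2 * s).
Proof.
  apply lim_ext with (0 - INR 2 * s ^ Init.Nat.pred 2).
  - apply (derivable_pt_lim_minus (fun _ => 1) (fun s => s^2)).
    + apply derivable_pt_lim_const.
    + apply derivable_pt_lim_pow.
  - simpl; ring.
Qed.

Lemma d_ln1m s : s < 1 -> derivable_pt_lim (fun s => ln (1 - s)) s (- / (1 - s)).
Proof.
  intro Hs.
  apply lim_ext with (/ (1 - s) * (0 - 1)).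
  - apply (derivable_pt_lim_comp (fun s => 1 - s) ln).
    + apply (derivable_pt_lim_minus (fun _ => 1) (fun s => s)).
      apply derivable_pt_lim_const. apply derivable_pt_lim_id.
    + apply derivable_pt_lim_ln. lra.
  - ring.
Qed.

Lemma pos_on (L L1 : R -> R) z :
  (forall s, -1 < s < 1 -> derivable_pt_lim L s (L1 s)) ->
  -1 < z < 1 -> (forall s, z < s < 1 -> L s <> 0) -> value_1_at_1 L ->
  forall s, z < s < 1 -> 0 < L s.
Proof.
  intros HD Hz Hnz Hv s Hs.
  destruct (Hv (1/2) ltac:(lra)) as [d [Hd Hd']].
  set (t := Rmax s (1 - d/2)).
  assert (Ht1 : s <= t) by apply Rmax_l.
  assert (Ht2 : 1 - d/2 <= t) by apply Rmax_r.
  assert (Ht3 : t < 1) by (apply Rmax_lub_lt; lra).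
  assert (HLt : 0 < L t).
  { specialize (Hd' t ltac:(lra)). apply Rabs_def2 in Hd'. lra. }
  destruct (Rtotal_order 0 (L s)) as [H|[H|H]]; [exact H| exfalso; apply (Hnz s Hs); auto|].
  exfalso.
  destruct (Rle_lt_or_eq_dec s t Ht1) as [Hst|Hst]; [|rewrite Hst in H; lra].
  destruct (IVT_interv L s t) as [r [Hr1 Hr2]]; auto.
  - intros a Ha. apply cont_of_lim with (L1 a). apply HD. lra.
  - apply (Hnz r); [lra|exact Hr2].
Qed.

Lemma key (p : R) (L L1 L2 u u1 u2 : R -> R) (z K U : R) :
  (forall s, -1 < s < 1 -> derivable_pt_lim L s (L1 s) /\ derivable_pt_lim L1 s (L2 s) /\
      (1 - s^2) * L2 s - 2 * s * L1 s + p * L s = 0) ->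
  -1 < z < 1 -> L z = 0 -> (forall s, z < s < 1 -> 0 < L s) -> value_1_at_1 L ->
  (forall s, derivable_pt_lim u s (u1 s)) -> (forall s, derivable_pt_lim u1 s (u2 s)) ->
  u z = 0 ->
  (forall s, z < s < 1 -> 0 < (1 - s^2) * u2 s - 2 * s * u1 s + p * u s) ->
  (forall s, z < s < 1 -> 0 <= u1 s <= K /\ 0 < u s <= U) ->
  False.
Proof.
  intros HL Hz HLz Hpos Hv Hu Hu1 Huz Hq Hb.
  set (W := fun s => (1 - s^2) * (L1 s * u s - L s * u1 s)).
  assert (HW : forall s, -1 < s < 1 ->
     derivable_pt_lim W s (- L s * ((1 - s^2) * u2 s - 2 * s * u1 s + p * u s))).
  { intros s Hs. destruct (HL s Hs) as [D1 [D2 E]].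
    eapply lim_ext.
    - apply (derivable_pt_lim_mult (fun s => 1 - s^2) (fun s => L1 s * u s - L s * u1 s)).
      + apply d_1ms2.
      + apply (derivable_pt_lim_minus (fun s => L1 s * u s) (fun s => L s * u1 s)).
        * apply (derivable_pt_lim_mult L1 u); [apply D2|apply Hu].
        * apply (derivable_pt_lim_mult L u1); [apply D1|apply Hu1].
    - assert (E' : (1 - s^2) * L2 s = 2 * s * L1 s - p * L s) by lra.
      transitivity (- 2 * s * (L1 s * u s - L s * u1 s) + (u s * ((1 - s^2) * L2 s)
         + (1 - s^2) * (L1 s * u1 s - L1 s * u1 s - L s * u2 s))).
      + ring.
      + rewrite E'. ring. }
  set (s1 := (z + 1) / 2).
  assert (HWz : W z = 0) by (unfold W; rewrite HLz, Huz; ring).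
  assert (Hdec : forall a b, z <= a -> a < b -> b < 1 -> W b < W a).
  { intros a b Ha Hab Hb1.
    destruct (MVT_cor2 W (fun s => - L s * ((1 - s^2) * u2 s - 2 * s * u1 s + p * u s)) a b Hab)
      as [c [Hc1 Hc2]].
    - intros c Hc. apply HW. lra.
    - assert (0 < L c * ((1 - c^2) * u2 c - 2 * c * u1 c + p * u c) * (b - a)).
      { apply Rmult_lt_0_compat; [apply Rmult_lt_0_compat|lra].
        apply Hpos; lra. apply Hq; lra. }
      lra. }
  assert (HWs1 : W s1 < 0) by (rewrite <- HWz; apply Hdec; unfold s1; lra).
  set (d0 := - W s1).
  assert (Hd0 : 0 < d0) by (unfold d0; lra).
  assert (HK : 0 <= K) by (destruct (Hb s1 ltac:(unfold s1; lra)) as [[? ?] _]; lra).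
  destruct (Hv (1/2) ltac:(lra)) as [d [Hd Hd']].
  set (s2 := Rmax (Rmax s1 0) (Rmax (1 - d/2) (1 - d0 / (8 * (K + 1))))).
  assert (Hs2a : Rmax s1 0 <= s2) by apply Rmax_l.
  assert (Hs2b : Rmax (1 - d/2) (1 - d0 / (8 * (K + 1))) <= s2) by apply Rmax_r.
  assert (Hs1le : s1 <= Rmax s1 0) by apply Rmax_l.
  assert (H0le : 0 <= Rmax s1 0) by apply Rmax_r.
  assert (Hdle : 1 - d/2 <= Rmax (1 - d/2) (1 - d0 / (8 * (K + 1)))) by apply Rmax_l.
  assert (Hd0le : 1 - d0 / (8 * (K + 1)) <= Rmax (1 - d/2) (1 - d0 / (8 * (K + 1)))) by apply Rmax_r.
  assert (Hs1lt : s1 < 1) by (unfold s1; lra).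
  assert (Hs2lt : s2 < 1).
  { unfold s2. apply Rmax_lub_lt; apply Rmax_lub_lt; try lra.
    assert (0 < d0 / (8 * (K + 1))) by (apply Rdiv_lt_0_compat; lra). lra. }
  set (c := d0 / (4 * U)).
  assert (HU : 0 < U) by (destruct (Hb s1 ltac:(unfold s1; lra)) as [_ [? ?]]; lra).
  assert (Hc : 0 < c) by (apply Rdiv_lt_0_compat; lra).
  assert (HL1 : forall s, s2 <= s < 1 -> L1 s <= - c / (1 - s)).
  { intros s Hs.
    assert (Hzs : z < s < 1) by (unfold s1 in *; lra).
    destruct (Hb s Hzs) as [[Hu1a Hu1b] [Hua Hub]].
    assert (HLs : 0 < L s < 3/2).
    { split. apply Hpos; auto. specialize (Hd' s ltac:(lra)). apply Rabs_def2 in Hd'. lra. }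
    assert (HWs : W s <= - d0).
    { unfold d0. destruct (Rle_lt_or_eq_dec s1 s ltac:(lra)) as [H|H].
      - assert (W s < W s1) by (apply Hdec; unfold s1 in *; lra). lra.
      - rewrite <- H. lra. }
    assert (Hsm : 1 - s <= d0 / (8 * (K + 1))) by lra.
    assert (Hsm' : 8 * (K+1) * (1 - s) <= d0).
    { apply Rmult_le_compat_l with (r := 8 * (K+1)) in Hsm; [|lra].
      field_simplify in Hsm; lra. }
    assert (Hterm : (1 - s^2) * (L s * u1 s) <= 3 * K * (1 - s)).
    { assert (0 <= 1 - s^2 <= 2 * (1 - s)) by nra.
      assert (L s * u1 s <= 3/2 * K) by nra. nra. }
    assert (Hm : (1 - s^2) * u s * L1 s < - d0 / 2).
    { unfold W in HWs. nra. }
    assert (Hone : 0 < 1 - s) by lra.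
    apply (Rmult_le_reg_r (1 - s)); [lra|].
    replace (- c / (1 - s) * (1 - s)) with (- c) by (field; lra).
    unfold c.
    destruct (Rle_lt_dec 0 (L1 s)) as [HL1p|HL1n].
    + exfalso. assert (0 <= (1 - s^2) * u s * L1 s); [|lra].
      apply Rmult_le_pos; [|lra]. apply Rmult_le_pos; nra.
    + assert (Hx : 2 * (1 - s) * U * L1 s <= (1 - s^2) * u s * L1 s).
      { assert (0 <= 1 - s^2 <= 2 * (1 - s)) by nra.
        assert ((1 - s^2) * u s <= 2 * (1 - s) * U) by nra. nra. }
      apply (Rmult_le_reg_l (4 * U)); [lra|].
      field_simplify; [|lra]. nra. }
  set (g := fun s => L s - c * ln (1 - s)).
  set (M := Rabs (g s2) / c + 1).
  assert (HM : 0 < M) by (unfold M; assert (0 <= Rabs (g s2) / c) by (unfold Rdiv; apply Rmult_le_pos; [apply Rabs_pos| left; apply Rinv_0_lt_compat; lra]); lra).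
  assert (He : 0 < exp (- M) < 1).
  { split. apply exp_pos. rewrite <- exp_0. apply exp_increasing. lra. }
  set (t := 1 - exp (- M) * (1 - s2)).
  assert (Ht : s2 < t < 1) by (unfold t; split; nra).
  assert (Hg : g t <= g s2).
  { destruct (MVT_cor2 g (fun s => L1 s - c * (- / (1 - s))) s2 t) as [xi [Hxi1 Hxi2]]; [lra| |].
    - intros x Hx.
      apply (derivable_pt_lim_minus L (fun s => c * ln (1 - s))).
      + apply HL. unfold s1 in *; lra.
      + apply (derivable_pt_lim_scal (fun s => ln (1 - s))). apply d_ln1m. lra.
    - assert (L1 xi <= - c / (1 - xi)) by (apply HL1; lra).
      assert (L1 xi - c * - / (1 - xi) <= 0) by (unfold Rdiv in *; lra).
      nra. }
  assert (Hlt : ln (1 - t) <= - M).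
  { unfold t. replace (1 - (1 - exp (- M) * (1 - s2))) with (exp (- M) * (1 - s2)) by ring.
    rewrite ln_mult; [|lra|lra]. rewrite ln_exp.
    assert (ln (1 - s2) <= 0); [|lra].
    rewrite <- ln_1. destruct (Rle_lt_or_eq_dec (1 - s2) 1 ltac:(lra)) as [H|H].
    - left. apply ln_increasing; lra.
    - rewrite H. lra. }
  assert (HLt : 0 < L t) by (apply Hpos; unfold s1 in *; lra).
  assert (Habs : g s2 <= Rabs (g s2)) by apply RRle_abs.
  assert (HcM : c * M = Rabs (g s2) + c) by (unfold M; field; lra).
  unfold g in Hg.
  assert (c * ln (1 - t) <= - (c * M)) by nra.
  fold (g s2) in Hg. lra.
Qed.

Lemma dquad A B C s : derivable_pt_lim (fun s => A*s^2 + B*s + C) s (2*A*s + B).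
Proof.
  apply lim_ext with (A * (INR 2 * s ^ Init.Nat.pred 2) + B * 1 + 0).
  - apply (derivable_pt_lim_plus (fun s => A*s^2 + B*s) (fun _ => C)).
    + apply (derivable_pt_lim_plus (fun s => A*s^2) (fun s => B*s)).
      * apply (derivable_pt_lim_scal (fun s => s^2)). apply derivable_pt_lim_pow.
      * apply (derivable_pt_lim_scal (fun s => s)). apply derivable_pt_lim_id.
    + apply derivable_pt_lim_const.
  - simpl; ring.
Qed.

Lemma dlin B C s : derivable_pt_lim (fun s => B*s + C) s B.
Proof.
  apply lim_ext with (B * 1 + 0).
  - apply (derivable_pt_lim_plus (fun s => B*s) (fun _ => C)).
    + apply (derivable_pt_lim_scal (fun s => s)). apply derivable_pt_lim_id.
    + apply derivable_pt_lim_const.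
  - ring.
Qed.

Lemma key_quad (p : R) (L L1 L2 : R -> R) (z A B C K U : R) :
  (forall s, -1 < s < 1 -> derivable_pt_lim L s (L1 s) /\ derivable_pt_lim L1 s (L2 s) /\
      (1 - s^2) * L2 s - 2 * s * L1 s + p * L s = 0) ->
  -1 < z < 1 -> L z = 0 -> (forall s, z < s < 1 -> 0 < L s) -> value_1_at_1 L ->
  A * z^2 + B * z + C = 0 ->
  (forall s, z < s < 1 -> 0 < (1 - s^2) * (2*A) - 2 * s * (2*A*s + B) + p * (A*s^2 + B*s + C)) ->
  (forall s, z < s < 1 -> 0 <= 2*A*s + B <= K /\ 0 < A*s^2 + B*s + C <= U) ->
  False.
Proof.
  intros HL Hz HLz Hpos Hv Hu Hq Hb.
  apply (key p L L1 L2 (fun s => A*s^2 + B*s + C) (fun s => 2*A*s + B) (fun _ => 2*A) z K U);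
    auto.
  - intro s. apply dquad.
  - intro s. apply (dlin (2*A) B).
Qed.

Theorem lemma5p6 (alpha : R) (L : R -> R) (z : R) :
  0 < alpha ->
  2 <= alpha * (alpha + 1) ->
  is_L_alpha alpha L ->
  largest_zero L z ->
  (1 + z) / 2 >= (alpha * (alpha + 1)) / (alpha * (alpha + 1) + 2).
Proof.
  intros Ha Hp [[L1 [L2 HL]] [_ Hv]] [Hz [HLz Hnz]].
  set (p := alpha * (alpha + 1)) in *.
  assert (Hpos : forall s, z < s < 1 -> 0 < L s).
  { apply (pos_on L L1 z); auto. intros s Hs. apply HL; auto. }
  apply Rle_ge.
  apply (Rmult_le_reg_r (2 * (p + 2))); [lra|].
  replace (p / (p + 2) * (2 * (p + 2))) with (2 * p) by (field; lra).
  replace ((1 + z) / 2 * (2 * (p + 2))) with ((1 + z) * (p + 2)) by (field; lra).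
  destruct (Rle_lt_dec (2 * p) ((1 + z) * (p + 2))) as [H|H]; [exact H|exfalso].
  assert (Hzl : (p + 2) * z < p - 2) by nra.
  destruct (Rlt_le_dec z 0) as [Hz0|Hz0].
  - apply (key_quad p L L1 L2 z 0 1 (-z) 1 (1 - z)); auto.
    + ring.
    + intros s Hs. nra.
    + intros s Hs. split; nra.
  - destruct (Rle_lt_dec p 6) as [H6|H6].
    + apply (key_quad p L L1 L2 z (p-2) (6 - p - (p-2)*z) (-(6-p)*z)
               (2*(p-2) + 6 - p - (p-2)*z) (4*(1-z))); auto.
      * ring.
      * intros s Hs.
        assert (Hp2 : 2 < p) by nra.
        assert (Hl1 : 0 < 2*(p-2) - 2*(p+2)*z) by nra.
        assert (Hl2 : 0 < 2*(p-2) - 2*(6-p)*z - 4*(p-2)*z^2) by nra.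
        assert (E : (1 - s^2) * (2*(p-2)) - 2 * s * (2*(p-2)*s + (6 - p - (p-2)*z))
                    + p * ((p-2)*s^2 + (6 - p - (p-2)*z)*s + (-(6-p)*z))
                  = (p-2)*(6-p)*(s-z)*(1-s)
                    + ((1-s)*(2*(p-2) - 2*(6-p)*z - 4*(p-2)*z^2) + (s-z)*(2*(p-2) - 2*(p+2)*z))/(1-z)).
        { field. lra. }
        rewrite E.
        assert (0 <= (p-2)*(6-p)*(s-z)*(1-s)).
        { apply Rmult_le_pos; [|lra]. apply Rmult_le_pos; [|lra]. nra. }
        assert (0 < ((1-s)*(2*(p-2) - 2*(6-p)*z - 4*(p-2)*z^2) + (s-z)*(2*(p-2) - 2*(p+2)*z))/(1-z)).
        { apply Rdiv_lt_0_compat; [|lra]. nra. }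
        lra.
      * intros s Hs.
        assert (Hp2 : 2 < p) by nra.
        assert (0 <= (p-2)*(s-z)) by nra.
        assert (0 < (p-2)*s) by nra.
        assert (0 <= (p-2)*(1-s)) by nra.
        assert (Hf : 0 < (p-2)*s + 6 - p) by lra.
        assert (Hg : 0 <= (p-2)*(1+s-z) + 6 - p) by nra.
        assert (E1 : (p-2)*s^2 + (6 - p - (p-2)*z)*s + (-(6-p)*z) = (s-z)*((p-2)*s + 6 - p)) by ring.
        assert (E2 : 4*(1-z) - ((p-2)*s^2 + (6 - p - (p-2)*z)*s + (-(6-p)*z)) = (1-s)*((p-2)*(1+s-z) + 6 - p)) by ring.
        split; split; try lra.
        rewrite E1. apply Rmult_lt_0_compat; lra.
        assert (0 <= (1-s)*((p-2)*(1+s-z) + 6 - p)) by (apply Rmult_le_pos; lra). lra.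
    + apply (key_quad p L L1 L2 z (p-2) ((12-2*p)*z) (-(10-p)*z^2)
               (2*(p-2) + (12-2*p)*z) ((p-2) + (12-2*p)*z - (10-p)*z^2)); auto.
      * ring.
      * intros s Hs.
        assert (Hz2 : (p+6)*z^2 < p-2).
        { set (y := z * (p+2)).
          assert (Hy : 0 <= y < p - 2) by (unfold y; split; nra).
          assert (Hy2 : y*y <= (p-2)*(p-2)) by (apply Rmult_le_compat; lra).
          assert (H3 : (p+6)*(y*y) <= (p+6)*((p-2)*(p-2))) by (apply Rmult_le_compat_l; lra).
          assert (H4 : (p+6)*((p-2)*(p-2)) < (p-2)*((p+2)*(p+2))) by nra.
          assert (H5 : (p+6)*(z^2) * ((p+2)*(p+2)) < (p-2)*((p+2)*(p+2))).
          { replace ((p+6)*(z^2) * ((p+2)*(p+2))) with ((p+6)*(y*y)) by (unfold y; ring). lra. }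
          apply Rmult_lt_reg_r with ((p+2)*(p+2)); [nra|lra]. }
        assert (E : (1 - s^2) * (2*(p-2)) - 2 * s * (2*(p-2)*s + (12-2*p)*z)
                    + p * ((p-2)*s^2 + (12-2*p)*z*s + (-(10-p)*z^2))
                  = (p-2)*(p-6)*(s-z)^2 + 2*((p-2) - (p+6)*z^2)) by ring.
        rewrite E.
        assert (0 <= (p-2)*(p-6)*(s-z)^2).
        { apply Rmult_le_pos; [apply Rmult_le_pos; lra|apply pow2_ge_0]. }
        lra.
      * intros s Hs.
        assert (0 <= (p-2)*(s-z)) by nra.
        assert (0 <= (p-2)*(1-s)) by nra.
        assert (0 <= (p-2)*(1+s-2*z)) by nra.
        assert (0 < (p-2)*s + (10-p)*z).
        { destruct (Rle_lt_dec p 10). nra.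
          assert ((p-10)*z <= (p-10)*s) by nra. nra. }
        assert (E : (p-2)*s^2 + (12-2*p)*z*s + (-(10-p)*z^2) = (s-z)*((p-2)*s + (10-p)*z)) by ring.
        assert (E2 : ((p-2) + (12-2*p)*z - (10-p)*z^2) - ((p-2)*s^2 + (12-2*p)*z*s + (-(10-p)*z^2))
                     = (1-s)*((p-2)*(1+s-2*z) + 8*z)) by ring.
        split; split; try lra.
        rewrite E. apply Rmult_lt_0_compat; lra.
        assert (0 <= (1-s)*((p-2)*(1+s-2*z) + 8*z)) by (apply Rmult_le_pos; lra). lra.
Qed.
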